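(* Let $G$ be the three-player game with $A_i=\{a_{i1},a_{i2},a_{i3}\}$ for $i=1,2,3$ and fitness vectors $\pi(a_{1r},a_{2c},a_{3k})$ given as follows (listed for row $r$ of player 1, column $c$ of player 2). For $a_{31}$: $r=1$: $(7,7,7),(3,0,3),(3,0,3)$; $r=2$: $(0,3,3),(7,7,0),(1,1,1)$; $r=3$: $(0,3,3),(1,1,1),(1,1,1)$. For $a_{32}$: $r=1$: $(3,3,0),(1,1,1),(1,1,1)$; $r=2$: $(1,1,1),(7,7,0),(1,1,1)$; $r=3$: $(7,0,7),(7,0,7),(7,0,7)$. For $a_{33}$: $r=1$: $(3,3,0),(1,1,1),(0,7,7)$; $r=2$: $(1,1,1),(7,7,0),(0,7,7)$; $r=3$: $(1,1,1),(1,1,1),(0,7,7)$. Then the strict Nash equilibrium $(a_{11},a_{21},a_{31})$ is not stable under perfect observability, and consequently no strategy profile of $G$ is stable under perfect observability.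
   Context: Preference types: $\Theta=\mathbb{R}^A$, $A=A_1\times A_2\times A_3$ (utility functions on $A$, extended multilinearly to mixed profiles); $\pi_i$ likewise extended. $\mathcal{M}(\Theta^3)$ is the set of product distributions $\mu=\mu_1\times\mu_2\times\mu_3$ with finitely supported marginals; $\operatorname{supp}\mu=\prod_i\operatorname{supp}\mu_i$, $\mu(\theta)=\prod_i\mu_i(\theta_i)$, $\mu_{-i}(\theta_{-i})=\prod_{j\ne i}\mu_j(\theta_j)$. Mutants: for nonempty $J\subseteq N=\{1,2,3\}$, a mutant sub-profile is $\tilde\theta_J\in\prod_{j\in J}(\Theta\setminus\operatorname{supp}\mu_j)$ with shares $\varepsilon\in(0,1)^{|J|}$, $\|\varepsilon\|=\max_j\varepsilon_j$; post-entry $\tilde\mu^\varepsilon_i=(1-\varepsilon_i)\mu_i+\varepsilon_i\delta_{\tilde\theta_i}$ for $i\in J$, $\tilde\mu^\varepsilon_i=\mu_i$ otherwise. Perfect observability: an equilibrium is a map $b:\operatorname{supp}\mu\to\prod_i\Delta(A_i)$ such that each $b(\theta)$ is a Nash equilibrium of the game with payoffs $\theta_1,\theta_2,\theta_3$; $B_1(\mu)$ is the set of these; $(\mu,b)$ is a configuration, with aggregate outcome $\varphi_{\mu,b}(a)=\sum_{\theta}\mu(\theta)\prod_i b_i(\theta)(a_i)$. Average fitness $\Pi_{\theta_i}(\mu;b)=\sum_{\theta'_{-i}}\mu_{-i}(\theta'_{-i})\pi_i(b(\theta_i,\theta'_{-i}))$. Balanced: equal average fitness of all types within each population. Focal set $B_1(\tilde\mu^\varepsilon;b)=\{\tilde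 b\in B_1(\tilde\mu^\varepsilon):\tilde b=b\text{ on }\operatorname{supp}\mu\}$. $(\mu,b)$ is stable if balanced and for every nonempty $J$ and every $\tilde\theta_J$ there is $\bar\epsilon\in(0,1)$ such that for all $\varepsilon$ with $\|\varepsilon\|<\bar\epsilon$ and all $\tilde b$ in the focal set, either (i) some $j\in J$ has $\Pi_{\theta_j}(\tilde\mu^\varepsilon;\tilde b)>\Pi_{\tilde\theta_j}(\tilde\mu^\varepsilon;\tilde b)$ for all $\theta_j\in\operatorname{supp}\mu_j$, or (ii) for every $i$ all types in $\operatorname{supp}\tilde\mu^\varepsilon_i$ have equal average fitness. A profile $\sigma\in\prod_i\Delta(A_i)$ is stable if $\varphi_\sigma(a)=\prod_i\sigma_i(a_i)$ is the aggregate outcome of a stable configuration. *)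

(* Defs.v *)
(* The reals of the paper are modelled by an arbitrary
   real closed field R. *)
From HB Require Import structures.
From mathcomp Require Import all_boot all_order all_algebra.
Set Implicit Arguments. Unset Strict Implicit. Unset Printing Implicit Defensive.
Import Order.TTheory GRing.Theory Num.Theory.
Local Open Scope ring_scope.

Section Game.
Variable R : rcfType.

(* Players N = 'I_3, each action set A_i = 'I_3 (index k stands for a_{i,k+1}). *)
Definition pprof := {ffun 'I_3 -> 'I_3}.
Definition Theta := {ffun pprof -> R}.            (* preference type: R^A *)
Definition mstrat := {ffun 'I_3 -> R}.
Definition mprof := {ffun 'I_3 -> mstrat}.
Definition tprof := {ffun 'I_3 -> Theta}.

Definition is_mstrat (t : mstrat) : Prop :=
  (forall a, 0 <= t a) /\ \sum_(a : 'I_3) t a = 1.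
Definition is_mprof (s : mprof) : Prop := forall i, is_mstrat (s i).

Definition ext (u : Theta) (s : mprof) : R :=
  \sum_(a : pprof) (\prod_(i < 3) s i (a i)) * u a.

Definition upd (s : mprof) (i : 'I_3) (t : mstrat) : mprof :=
  [ffun j => if j == i then t else s j].

Definition is_nash (th : tprof) (s : mprof) : Prop :=
  is_mprof s /\
  forall (i : 'I_3) (t : mstrat), is_mstrat t -> ext (th i) (upd s i t) <= ext (th i) s.

(* fitness table: fit_table[k][r][c] = pi(a_{1,r+1}, a_{2,c+1}, a_{3,k+1}) *)
Definition fit_table : seq (seq (seq (nat * nat * nat))) :=
  [:: [:: [:: (7,7,7); (3,0,3); (3,0,3)];
          [:: (0,3,3); (7,7,0); (1,1,1)];
          [:: (0,3,3); (1,1,1); (1,1,1)]];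
      [:: [:: (3,3,0); (1,1,1); (1,1,1)];
          [:: (1,1,1); (7,7,0); (1,1,1)];
          [:: (7,0,7); (7,0,7); (7,0,7)]];
      [:: [:: (3,3,0); (1,1,1); (0,7,7)];
          [:: (1,1,1); (7,7,0); (0,7,7)];
          [:: (1,1,1); (1,1,1); (0,7,7)]]]%N.

Definition fit (i : 'I_3) (a : pprof) : nat :=
  let '(x, y, z) :=
    nth (0,0,0)%N (nth [::] (nth [::] fit_table (a (inord 2))) (a (inord 0))) (a (inord 1)) in
  if val i == 0%N then x else if val i == 1%N then y else z.

Definition pi (i : 'I_3) : Theta := [ffun a => (fit i a)%:R].

(* A product distribution mu = mu_0 x mu_1 x mu_2 with finite supports is
   given by supports s i (duplicate-free lists) and weights w i. *)
Definition is_pop (s : 'I_3 -> seq Theta) (w : 'I_3 -> Theta -> R) : Prop :=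
  forall i, [/\ uniq (s i), (forall th, th \in s i -> 0 < w i th)
             & \sum_(th <- s i) w i th = 1].

Definition mkprof (x y z : Theta) : tprof :=
  [ffun i : 'I_3 => nth x [:: x; y; z] i].

(* supp mu = prod_i supp mu_i, as a list of type profiles *)
Definition prof_seq (s : 'I_3 -> seq Theta) : seq tprof :=
  flatten [seq [seq mkprof x y z | y <- s (inord 1), z <- s (inord 2)] | x <- s (inord 0)].

Definition is_eq (s : 'I_3 -> seq Theta) (b : tprof -> mprof) : Prop :=
  forall t, t \in prof_seq s -> is_nash t (b t).

Definition avg_fit (s : 'I_3 -> seq Theta) (w : 'I_3 -> Theta -> R)
    (b : tprof -> mprof) (i : 'I_3) (th : Theta) : R :=
  \sum_(t <- prof_seq s | t i == th)
     (\prod_(j < 3 | j != i) w j (t j)) * ext (pi i) (b t).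

Definition balanced (s : 'I_3 -> seq Theta) (w : 'I_3 -> Theta -> R)
    (b : tprof -> mprof) : Prop :=
  forall i th th', th \in s i -> th' \in s i ->
    avg_fit s w b i th = avg_fit s w b i th'.

Definition aggr (s : 'I_3 -> seq Theta) (w : 'I_3 -> Theta -> R)
    (b : tprof -> mprof) (a : pprof) : R :=
  \sum_(t <- prof_seq s) (\prod_(i < 3) w i (t i)) * (\prod_(i < 3) b t i (a i)).

(* post-entry population: mutants mt j with share e j enter populations j in J *)
Definition post_s (J : {set 'I_3}) (s : 'I_3 -> seq Theta) (mt : 'I_3 -> Theta)
    : 'I_3 -> seq Theta :=
  fun i => if i \in J then rcons (s i) (mt i) else s i.

Definition post_w (J : {set 'I_3}) (w : 'I_3 -> Theta -> R) (mt : 'I_3 -> Theta)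
    (e : 'I_3 -> R) : 'I_3 -> Theta -> R :=
  fun i th => if i \in J then
                (if th == mt i then e i else (1 - e i) * w i th)
              else w i th.

Definition stable (s : 'I_3 -> seq Theta) (w : 'I_3 -> Theta -> R)
    (b : tprof -> mprof) : Prop :=
  [/\ is_pop s w, is_eq s b, balanced s w b &
  forall (J : {set 'I_3}) (mt : 'I_3 -> Theta),
    J != set0 -> (forall j, j \in J -> mt j \notin s j) ->
    exists eb : R, 0 < eb < 1 /\
    forall e : 'I_3 -> R,
      (forall j, j \in J -> 0 < e j < 1) ->
      (forall j, j \in J -> e j < eb) ->
      let s' := post_s J s mt in
      let w' := post_w J w mt e in
      forall bt : tprof -> mprof,
        is_eq s' bt -> (forall t, t \in prof_seq s -> bt t = b t) ->
        (exists2 j, j \in J & forall th, th \in s j ->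
            avg_fit s' w' bt j (mt j) < avg_fit s' w' bt j th)
        \/ (forall i th th', th \in s' i -> th' \in s' i ->
              avg_fit s' w' bt i th = avg_fit s' w' bt i th')].

Definition stable_profile (sigma : mprof) : Prop :=
  exists s w b, stable s w b /\
    forall a : pprof, aggr s w b a = \prod_(i < 3) sigma i (a i).

Definition pure_prof (a : pprof) : mprof :=
  [ffun i => [ffun k => if k == a i then 1 else 0]].

End Game.

(* Main.v *)
Require Import Defs.
From HB Require Import structures.
From mathcomp Require Import all_boot all_order all_algebra.
Import Order.TTheory GRing.Theory Num.Theory.
Local Open Scope ring_scope.
Set Implicit Arguments. Unset Strict Implicit. Unset Printing Implicit Defensive.
Definition setp (p : pprof) (l x : 'I_3) : pprof := [ffun i => if i == l then x else p i].
Definition expb (l : 'I_3) : pprof :=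
  [ffun i : 'I_3 => inord (nth 0 (nth [::] [:: [:: 0; 2; 2]; [:: 2; 0; 1]; [:: 1; 1; 0]] l) i)]%N.
Definition zerop : pprof := [ffun _ => ord0].

Lemma ord3P (i : 'I_3) : [\/ i = inord 0, i = inord 1 | i = inord 2].
Proof.
case: i => [[|[|[|//]]] H]; [constructor 1|constructor 2|constructor 3];
  by apply: val_inj; rewrite /= inordK.
Qed.

Ltac ocase i := case: (ord3P i) => ->.
Ltac osimp := rewrite ?ffunE -?val_eqE /= ?inordK //=.

Lemma fit_le7 (i : 'I_3) (a : pprof) : (fit i a <= 7)%N.
Proof.
rewrite /fit; move: (a (inord 2)) (a (inord 0)) (a (inord 1)) => k r c.
ocase k; ocase r; ocase c; rewrite ?inordK //; by do 2?case: ifP.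
Qed.

Lemma fit_expl (l k x : 'I_3) : k != l -> fit k (setp (expb l) l x) = 7%N.
Proof.
ocase l; ocase k; rewrite -?val_eqE /= ?inordK //; ocase x; 
rewrite /fit /setp /expb; osimp.
Qed.

Lemma fit_expl0 (l x : 'I_3) : fit l (setp (expb l) l x) = 0%N.
Proof.
ocase l; ocase x; rewrite /fit /setp /expb; osimp.
Qed.

Lemma fit_zero (k : 'I_3) : fit k zerop = 7%N.
Proof. ocase k; rewrite /fit /zerop; osimp. Qed.

Definition dlt (R : rcfType) (x : 'I_3) : mstrat R := [ffun k => if k == x then 1 else 0].

Lemma sum_prod (R : rcfType) (s : mprof R) :
  \sum_(a : pprof) \prod_(i < 3) s i (a i) = \prod_(i < 3) \sum_(x : 'I_3) s i x.
Proof. by rewrite bigA_distr_bigA. Qed.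

Lemma prob1 (R : rcfType) (s : mprof R) : is_mprof s ->
  \sum_(a : pprof) \prod_(i < 3) s i (a i) = 1.
Proof. by move=> Hs; rewrite sum_prod big1 // => i _; case: (Hs i). Qed.

Lemma prob_ge0 (R : rcfType) (s : mprof R) (a : pprof) : is_mprof s ->
  0 <= \prod_(i < 3) s i (a i).
Proof. by move=> Hs; apply: prodr_ge0 => i _; case: (Hs i). Qed.

Lemma ext_const (R : rcfType) (c : R) (s : mprof R) : is_mprof s ->
  ext [ffun _ => c] s = c.
Proof.
move=> Hs; rewrite /ext.
under eq_bigr => a _ do rewrite ffunE.
by rewrite -mulr_suml prob1 // mul1r.
Qed.

Lemma ext_le (R : rcfType) (u : Theta R) (M : R) (s : mprof R) : is_mprof s ->
  (forall a, u a <= M) -> ext u s <= M.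
Proof.
move=> Hs Hu; rewrite /ext.
apply: (@le_trans _ _ (\sum_(a : pprof) (\prod_(i < 3) s i (a i)) * M)).
  by apply: ler_sum => a _; apply: ler_wpM2l; [apply: prob_ge0|apply: Hu].
by rewrite -mulr_suml prob1 // mul1r.
Qed.

Lemma ext_pure (R : rcfType) (u : Theta R) (p : pprof) : ext u (pure_prof R p) = u p.
Proof.
rewrite /ext (bigD1 p) //= [X in _ + X]big1 ?addr0.
  by rewrite big1 ?mul1r // => i _; rewrite !ffunE eqxx.
move=> a /eqP Hap.
have [i Hi] : exists i, a i != p i.
  case: (pickP (fun i => a i != p i)) => [i Hi|H]; first by exists i.
  by exfalso; apply: Hap; apply/ffunP => i; move: (H i) => /negbFE/eqP.
by rewrite (bigD1 i) //= !ffunE (negbTE Hi) mul0r mul0r.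
Qed.

Lemma ext_upd (R : rcfType) (u : Theta R) (s : mprof R) (l : 'I_3) (t : mstrat R) :
  ext u (upd s l t) = \sum_(x : 'I_3) t x * ext u (upd s l (dlt R x)).
Proof.
rewrite /ext.
under [RHS]eq_bigr => x _ do rewrite mulr_sumr.
rewrite exchange_big /=; apply: eq_bigr => a _.
under [RHS]eq_bigr => x _ do rewrite mulrA.
rewrite -mulr_suml; congr (_ * _).
rewrite (bigD1 l) //=.
under [RHS]eq_bigr => x _ do rewrite (bigD1 l) //=.
rewrite !ffunE eqxx.
have -> : \prod_(i < 3 | i != l) upd s l t i (a i) = \prod_(i < 3 | i != l) s i (a i).
  by apply: eq_bigr => i Hi; rewrite ffunE (negbTE Hi).
under [RHS]eq_bigr => x _.
  rewrite !ffunE eqxx.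
  have -> : \prod_(i < 3 | i != l) upd s l (dlt R x) i (a i) = \prod_(i < 3 | i != l) s i (a i).
    by apply: eq_bigr => i Hi; rewrite ffunE (negbTE Hi).
  over.
rewrite /=.
under [RHS]eq_bigr => x _ do rewrite mulrA.
rewrite -mulr_suml; congr (_ * _).
rewrite (bigD1 (a l)) //= ffunE eqxx mulr1 big1 ?addr0 // => x Hx.
by rewrite ffunE eq_sym (negbTE Hx) mulr0.
Qed.

Notation o0 := (inord 0 : 'I_3).
Notation o1 := (inord 1 : 'I_3).
Notation o2 := (inord 2 : 'I_3).

Definition argmax3 (R : rcfType) (f : 'I_3 -> R) : 'I_3 :=
  if (f o1 <= f o0) && (f o2 <= f o0) then o0
  else if f o2 <= f o1 then o1 else o2.

Lemma argmax3P (R : rcfType) (f : 'I_3 -> R) y : f y <= f (argmax3 f).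
Proof.
rewrite /argmax3.
case: (leP (f o1) (f o0)) => H10; case: (leP (f o2) (f o0)) => H20 /=;
  try case: (leP (f o2) (f o1)) => H21;
  ocase y => //; apply/ltW => //; try exact: (lt_trans H10).
all: try exact: (lt_le_trans H20).
all: try exact: (lt_trans H21).
all: try exact: (le_lt_trans H21).
all: try exact: (lt_le_trans H10).
all: try (apply: (le_lt_trans _ H21); exact: ltW).
all: try (apply: (lt_le_trans H20); exact: ltW).
Qed.

Definition bestp (R : rcfType) (u : Theta R) (p : pprof) (l : 'I_3) : pprof :=
  setp p l (argmax3 (fun x => u (setp p l x))).

Lemma setp_setp p l x y : setp (setp p l x) l y = setp p l y.
Proof. by apply/ffunP => i; rewrite !ffunE; case: (i == l). Qed.

Lemma upd_pure (R : rcfType) p l x : upd (pure_prof R p) l (dlt R x) = pure_prof R (setp p l x).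
Proof.
by apply/ffunP => i; rewrite !ffunE /dlt; case: (i == l).
Qed.

Lemma mstrat_dlt (R : rcfType) x : is_mstrat (dlt R x).
Proof.
split; first by move=> a; rewrite ffunE; case: ifP.
rewrite (bigD1 x) //= ffunE eqxx big1 ?addr0 // => y Hy.
by rewrite ffunE (negbTE Hy).
Qed.

Lemma mprof_pure (R : rcfType) p : is_mprof (pure_prof R p).
Proof. move=> i; have := mstrat_dlt R (p i); by rewrite /dlt /pure_prof ffunE. Qed.

Lemma mprof_upd (R : rcfType) (s : mprof R) i t : is_mprof s -> is_mstrat t -> is_mprof (upd s i t).
Proof. by move=> Hs Ht j; rewrite ffunE; case: ifP. Qed.

Lemma nash_inc (R : rcfType) (u : Theta R) p l t : is_mstrat t ->
  ext u (upd (pure_prof R (bestp u p l)) l t) <= ext u (pure_prof R (bestp u p l)).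
Proof.
move=> [Ht0 Ht1]; rewrite ext_upd ext_pure.
apply: (@le_trans _ _ (\sum_(x : 'I_3) t x * u (bestp u p l))).
  apply: ler_sum => x _; rewrite upd_pure ext_pure; apply: ler_wpM2l => //.
  by rewrite /bestp setp_setp; apply: (argmax3P (fun x => u (setp p l x))).
by rewrite -mulr_suml Ht1 mul1r.
Qed.

Definition cst (R : rcfType) (c : R) : Theta R := [ffun _ => c].

Lemma nash_intro (R : rcfType) (th : tprof R) (s : mprof R) : is_mprof s ->
  (forall i, (exists c, th i = cst c) \/
     forall t, is_mstrat t -> ext (th i) (upd s i t) <= ext (th i) s) -> is_nash th s.
Proof.
move=> Hs H; split => // i t Ht; case: (H i) => [[c ->]|]; last by apply.
by rewrite /cst !ext_const //; apply: mprof_upd.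
Qed.

Definition mtv (R : rcfType) (r : seq (Theta R)) : Theta R :=
  cst (1 + \sum_(th <- r) `|th zerop|).

Lemma mtv_notin (R : rcfType) (r : seq (Theta R)) : mtv r \notin r.
Proof.
apply/negP => Hin.
have key : `|mtv r zerop| <= \sum_(th <- r) `|th zerop|.
  rewrite (big_rem _ Hin) /= lerDl; apply: sumr_ge0 => ? _; apply: normr_ge0.
move: key; rewrite /mtv /cst ffunE => key.
have := le_trans (ler_norm _) key.
by rewrite -[X in _ <= X]add0r lerD2r ler10.
Qed.

Lemma mk0 (R : rcfType) (x y z : Theta R) : mkprof x y z o0 = x.
Proof. by rewrite /mkprof ffunE inordK. Qed.
Lemma mk1 (R : rcfType) (x y z : Theta R) : mkprof x y z o1 = y.
Proof. by rewrite /mkprof ffunE inordK. Qed.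
Lemma mk2 (R : rcfType) (x y z : Theta R) : mkprof x y z o2 = z.
Proof. by rewrite /mkprof ffunE inordK. Qed.

Lemma mk_eta (R : rcfType) (t : tprof R) : t = mkprof (t o0) (t o1) (t o2).
Proof. by apply/ffunP => i; ocase i; rewrite ?mk0 ?mk1 ?mk2. Qed.

Lemma mem_prof_seq (R : rcfType) (s : 'I_3 -> seq (Theta R)) (t : tprof R) :
  (t \in prof_seq s) <-> (forall i, t i \in s i).
Proof.
split.
  move=> /flattenP [l /mapP [x Hx ->]] /allpairsPdep [y [z [Hy Hz ->]]] i.
  by ocase i; rewrite ?mk0 ?mk1 ?mk2.
move=> H; rewrite (mk_eta t); apply/flattenP.
exists [seq mkprof (t o0) y z | y <- s o1, z <- s o2]; first by apply: map_f.
by apply: allpairs_f.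
Qed.

Lemma sum_prof_seq (R : rcfType) (s : 'I_3 -> seq (Theta R)) (P : pred (tprof R)) (F : tprof R -> R) :
  \sum_(t <- prof_seq s | P t) F t =
  \sum_(x <- s o0) \sum_(y <- s o1) \sum_(z <- s o2)
     (if P (mkprof x y z) then F (mkprof x y z) else 0).
Proof.
rewrite big_mkcond /prof_seq big_flatten big_map /=; apply: eq_bigr => x _.
by rewrite big_allpairs_dep.
Qed.

Definition mtf (R : rcfType) (s : 'I_3 -> seq (Theta R)) (i : 'I_3) : Theta R := mtv (s i).
Definition stf (R : rcfType) (s : 'I_3 -> seq (Theta R)) (i : 'I_3) : Theta R := head (mtf s i) (s i).
Definition repl (R : rcfType) (s : 'I_3 -> seq (Theta R)) (t : tprof R) : tprof R :=
  [ffun i => if t i == mtf s i then stf s i else t i].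
Definition btf (R : rcfType) (s : 'I_3 -> seq (Theta R)) (b : tprof R -> mprof R) (t : tprof R) : mprof R :=
  let m0 := t o0 == mtf s o0 in
  let m1 := t o1 == mtf s o1 in
  let m2 := t o2 == mtf s o2 in
  if m0 && m1 && m2 then pure_prof R zerop
  else if ~~ m0 && m1 && m2 then pure_prof R (bestp (t o0) (expb o0) o0)
  else if m0 && ~~ m1 && m2 then pure_prof R (bestp (t o1) (expb o1) o1)
  else if m0 && m1 && ~~ m2 then pure_prof R (bestp (t o2) (expb o2) o2)
  else b (repl s t).

Lemma stf_in (R : rcfType) (s : 'I_3 -> seq (Theta R)) (w : 'I_3 -> Theta R -> R) i :
  is_pop s w -> stf s i \in s i.
Proof.
move=> /(_ i) [_ _]; rewrite /stf; case: (s i) => [|x r] //=.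
  by rewrite big_nil => /eqP; rewrite eq_sym oner_eq0.
by rewrite inE eqxx.
Qed.

Lemma post_sT (R : rcfType) (s : 'I_3 -> seq (Theta R)) mt i :
  post_s setT s mt i = rcons (s i) (mt i).
Proof. by rewrite /post_s in_setT. Qed.

Lemma mem_post (R : rcfType) (s : 'I_3 -> seq (Theta R)) (t : tprof R) :
  t \in prof_seq (post_s setT s (mtf s)) -> forall i, t i = mtf s i \/ t i \in s i.
Proof.
move/mem_prof_seq => H i; move: (H i); rewrite post_sT mem_rcons inE.
by case/orP => [/eqP ->|]; [left|right].
Qed.

Lemma is_cst (R : rcfType) (s : 'I_3 -> seq (Theta R)) (t : tprof R) i :
  t i == mtf s i -> exists c, t i = cst c.
Proof. by move/eqP => ->; rewrite /mtf /mtv; eexists. Qed.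

Lemma nash_else (R : rcfType) (s : 'I_3 -> seq (Theta R)) w b (t : tprof R) :
  is_pop s w -> is_eq s b -> t \in prof_seq (post_s setT s (mtf s)) ->
  is_nash t (b (repl s t)).
Proof.
move=> Hp Hb Ht.
have Hr : repl s t \in prof_seq s.
  apply/mem_prof_seq => i; rewrite ffunE; case: (mem_post Ht i) => [->|H].
    by rewrite eqxx; apply: stf_in Hp.
  by case: ifP => // /eqP E; move: H; rewrite E (negbTE (mtv_notin _)).
have [Hm HN] := Hb _ Hr.
apply: nash_intro => // i.
case E: (t i == mtf s i); first by left; apply: is_cst E.
right => u Hu; have := HN i u Hu; by rewrite ffunE E.
Qed.

Lemma nash_all (R : rcfType) (s : 'I_3 -> seq (Theta R)) (t : tprof R) :
  (forall i, t i == mtf s i) -> is_nash t (pure_prof R zerop).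
Proof. move=> H; apply: nash_intro; first exact: mprof_pure. by move=> i; left; apply: is_cst (H i). Qed.

Lemma nash_expl (R : rcfType) (s : 'I_3 -> seq (Theta R)) (t : tprof R) l :
  (forall i, i != l -> t i == mtf s i) -> is_nash t (pure_prof R (bestp (t l) (expb l) l)).
Proof.
move=> H; apply: nash_intro; first exact: mprof_pure.
move=> i; case: (eqVneq i l) => [->|Hi]; last by left; apply: is_cst (H i Hi).
by right => u Hu; apply: nash_inc.
Qed.

Lemma oneq (i j : 'I_3) : (i != j) = (val i != val j).
Proof. by []. Qed.

Lemma eq_btf (R : rcfType) (s : 'I_3 -> seq (Theta R)) w b :
  is_pop s w -> is_eq s b -> is_eq (post_s setT s (mtf s)) (btf s b).
Proof.
move=> Hp Hb t Ht; rewrite /btf /=.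
case E0: (t o0 == mtf s o0); case E1: (t o1 == mtf s o1); case E2: (t o2 == mtf s o2) => /=;
  try exact: nash_else Hp Hb Ht.
- by apply: (@nash_all _ s) => i; ocase i.
- by apply: (@nash_expl _ s) => i; ocase i; rewrite // oneq /= !inordK.
- by apply: (@nash_expl _ s) => i; ocase i; rewrite // oneq /= !inordK.
- by apply: (@nash_expl _ s) => i; ocase i; rewrite // oneq /= !inordK.
Qed.

Lemma o01 : (o0 == o1) = false. Proof. by rewrite -val_eqE /= !inordK. Qed.
Lemma o02 : (o0 == o2) = false. Proof. by rewrite -val_eqE /= !inordK. Qed.
Lemma o12 : (o1 == o2) = false. Proof. by rewrite -val_eqE /= !inordK. Qed.
Lemma o10 : (o1 == o0) = false. Proof. by rewrite -val_eqE /= !inordK. Qed.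
Lemma o20 : (o2 == o0) = false. Proof. by rewrite -val_eqE /= !inordK. Qed.
Lemma o21 : (o2 == o1) = false. Proof. by rewrite -val_eqE /= !inordK. Qed.
Definition oE := (o01, o02, o12, o10, o20, o21, eqxx).


Lemma btf_all (R : rcfType) s b (t : tprof R) :
  (forall i, t i == mtf s i) -> btf s b t = pure_prof R zerop.
Proof. by move=> H; rewrite /btf /= !H. Qed.

Lemma btf_two (R : rcfType) s b (t : tprof R) l :
  (forall i, i != l -> t i == mtf s i) -> t l != mtf s l ->
  btf s b t = pure_prof R (bestp (t l) (expb l) l).
Proof.
rewrite /btf /=; ocase l => H Hl; rewrite (negbTE Hl) ?H ?oE //=.
Qed.

Lemma btf_else (R : rcfType) s b (t : tprof R) :
  (forall i j, t i == mtf s i -> t j == mtf s j -> i = j) ->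
  btf s b t = b (repl s t).
Proof.
move=> H; rewrite /btf /=.
have H01 : ~~ ((t o0 == mtf s o0) && (t o1 == mtf s o1)).
  by apply/negP => /andP [A B]; move: (H _ _ A B) => /eqP; rewrite oE.
have H02 : ~~ ((t o0 == mtf s o0) && (t o2 == mtf s o2)).
  by apply/negP => /andP [A B]; move: (H _ _ A B) => /eqP; rewrite oE.
have H12 : ~~ ((t o1 == mtf s o1) && (t o2 == mtf s o2)).
  by apply/negP => /andP [A B]; move: (H _ _ A B) => /eqP; rewrite oE.
move: H01 H02 H12.
by case: (t o0 == mtf s o0); case: (t o1 == mtf s o1); case: (t o2 == mtf s o2).
Qed.

Definition setk (R : rcfType) (t : tprof R) (k : 'I_3) (x : Theta R) : tprof R :=
  [ffun i => if i == k then x else t i].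

Lemma third (k j l i : 'I_3) : j != k -> l != k -> j != l -> i != k -> i != l -> i = j.
Proof. by ocase k; ocase j; ocase l; ocase i; rewrite ?oE. Qed.

Lemma ext_pi_pure (R : rcfType) k q : ext (Defs.pi R k) (pure_prof R q) = (fit k q)%:R.
Proof. by rewrite ext_pure ffunE. Qed.

Lemma stf_neq (R : rcfType) s (w : 'I_3 -> Theta R -> R) k : is_pop s w -> (stf s k == mtf s k) = false.
Proof.
move=> Hp; apply/negbTE/negP => /eqP E; have := stf_in k Hp; rewrite E.
by rewrite (negbTE (mtv_notin _)).
Qed.

Lemma ptw (R : rcfType) s w b (t : tprof R) k :
  is_pop s w -> is_eq s b -> t \in prof_seq (post_s setT s (mtf s)) -> t k = stf s k ->
  ext (Defs.pi R k) (btf s b t) <= ext (Defs.pi R k) (btf s b (setk t k (mtf s k))).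
Proof.
move=> Hp Hb Ht Htk.
have Hst := stf_neq k Hp.
have HP : ext (Defs.pi R k) (btf s b t) <= 7%:R.
  apply: ext_le; first by case: (eq_btf Hp Hb Ht).
  by move=> a; rewrite ffunE ler_nat fit_le7.
have Ht'k : setk t k (mtf s k) k = mtf s k by rewrite ffunE eqxx.
have Ht'i : forall i, i != k -> setk t k (mtf s k) i = t i.
  by move=> i Hi; rewrite ffunE (negbTE Hi).
case: (pickP (fun i => (i != k) && (t i == mtf s i))) => [j /andP[Hjk Hj] | Hnone].
  case: (pickP (fun i => (i != k) && (t i != mtf s i))) => [l /andP[Hlk Hl]| Hall].
    have Hjl : j != l by apply/eqP => E; move: Hl; rewrite -E Hj.
    rewrite (@btf_two _ s b (setk t k (mtf s k)) l); last by rewrite Ht'i.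
      by rewrite ext_pi_pure fit_expl // eq_sym.
    move=> i Hil; case: (eqVneq i k) => [->|Hik]; first by rewrite Ht'k.
    by rewrite Ht'i // (third Hjk Hlk Hjl Hik Hil).
  rewrite (@btf_all _ s b (setk t k (mtf s k))); first by rewrite ext_pi_pure fit_zero.
  move=> i; case: (eqVneq i k) => [->|Hik]; first by rewrite Ht'k.
  by rewrite Ht'i //; move: (Hall i); rewrite Hik /= => /negbFE.
have E1 : btf s b t = b (repl s t).
  apply: btf_else => i j Hi Hj.
  case: (eqVneq i k) => [Eik|Hik]; first by move: Hi; rewrite Eik Htk Hst.
  by move: (Hnone i); rewrite Hik Hi.
have E2 : btf s b (setk t k (mtf s k)) = b (repl s (setk t k (mtf s k))).
  apply: btf_else => i j Hi Hj.
  have P : forall i, setk t k (mtf s k) i == mtf s i -> i = k.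
    move=> i' Hi'; case: (eqVneq i' k) => // Hik.
    by move: (Hnone i'); rewrite Hik -Ht'i // Hi'.
  by rewrite (P _ Hi) (P _ Hj).
rewrite E1 E2; suff -> : repl s (setk t k (mtf s k)) = repl s t by [].
apply/ffunP => i.
rewrite !ffunE; case: (eqVneq i k) => [->|Hik]; first by rewrite eqxx Htk Hst.
by [].
Qed.

Lemma ptw_strict (R : rcfType) s w b (t : tprof R) k :
  is_pop s w -> (forall i, i != k -> t i == mtf s i) -> t k = stf s k ->
  ext (Defs.pi R k) (btf s b t) < ext (Defs.pi R k) (btf s b (setk t k (mtf s k))).
Proof.
move=> Hp H Htk; have Hst := stf_neq k Hp.
rewrite (@btf_two _ s b t k) //; last by rewrite Htk Hst.
rewrite (@btf_all _ s b (setk t k (mtf s k))); last first.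
  move=> i; rewrite ffunE; case: (eqVneq i k) => [->|Hik]; first by rewrite eqxx.
  exact: H.
by rewrite !ext_pi_pure fit_expl0 fit_zero ltr_nat.
Qed.

Lemma sum_pick (R : rcfType) (T : eqType) (r : seq T) (a : T) (G : T -> R) :
  uniq r -> a \in r -> \sum_(x <- r) (if x == a then G x else 0) = G a.
Proof.
move=> Hu Ha; rewrite (big_rem a Ha) /= eqxx big1_seq ?addr0 // => x /andP[_ Hx].
by move: Hx; rewrite mem_rem_uniq // inE => /andP [/negbTE -> _].
Qed.

Lemma sum_pull (R : rcfType) (T : Type) (r : seq T) (c : bool) (G : T -> R) :
  \sum_(x <- r) (if c then G x else 0) = if c then \sum_(x <- r) G x else 0.
Proof. by case: c => //; rewrite big1. Qed.

Lemma reindex (R : rcfType) (s : 'I_3 -> seq (Theta R)) k a c (F : tprof R -> R) :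
  uniq (s k) -> a \in s k -> c \in s k ->
  \sum_(t <- prof_seq s | t k == a) F t = \sum_(t <- prof_seq s | t k == c) F (setk t k a).
Proof.
rewrite !sum_prof_seq; ocase k => Hu Ha Hc.
- rewrite [LHS](eq_bigr (fun x => if x == a then \sum_(y <- s o1) \sum_(z <- s o2) F (mkprof x y z) else 0)).
    rewrite [RHS](eq_bigr (fun x => if x == c then \sum_(y <- s o1) \sum_(z <- s o2) F (setk (mkprof x y z) o0 a) else 0)).
      rewrite !sum_pick //; apply: eq_bigr => y _; apply: eq_bigr => z _; congr F.
      by apply/ffunP => i; ocase i; rewrite ?mk0 ?mk1 ?mk2 ffunE ?oE ?mk0 ?mk1 ?mk2.
    move=> x _; rewrite -sum_pull; apply: eq_bigr => y _; rewrite -sum_pull.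
    by apply: eq_bigr => z _; rewrite mk0.
  move=> x _; rewrite -sum_pull; apply: eq_bigr => y _; rewrite -sum_pull.
  by apply: eq_bigr => z _; rewrite mk0.
- apply: eq_bigr => x _.
  rewrite [LHS](eq_bigr (fun y => if y == a then \sum_(z <- s o2) F (mkprof x y z) else 0)).
    rewrite [RHS](eq_bigr (fun y => if y == c then \sum_(z <- s o2) F (setk (mkprof x y z) o1 a) else 0)).
      rewrite !sum_pick //; apply: eq_bigr => z _; congr F.
      by apply/ffunP => i; ocase i; rewrite ?mk0 ?mk1 ?mk2 ffunE ?oE ?mk0 ?mk1 ?mk2.
    by move=> y _; rewrite -sum_pull; apply: eq_bigr => z _; rewrite mk1.
  by move=> y _; rewrite -sum_pull; apply: eq_bigr => z _; rewrite mk1.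
- apply: eq_bigr => x _; apply: eq_bigr => y _.
  rewrite [LHS](eq_bigr (fun z => if z == a then F (mkprof x y z) else 0)); last by move=> z _; rewrite mk2.
  rewrite [RHS](eq_bigr (fun z => if z == c then F (setk (mkprof x y z) o2 a) else 0)); last by move=> z _; rewrite mk2.
  rewrite !sum_pick //; congr F.
  by apply/ffunP => i; ocase i; rewrite ?mk0 ?mk1 ?mk2 ffunE ?oE ?mk0 ?mk1 ?mk2.
Qed.

From mathcomp Require Import lra.

Lemma not_mut (R : rcfType) (s : 'I_3 -> seq (Theta R)) (t : tprof R) i :
  t \in prof_seq s -> (t i == mtf s i) = false.
Proof.
move/mem_prof_seq/(_ i) => H; apply/negbTE/negP => /eqP E; move: H.
by rewrite E (negbTE (mtv_notin _)).
Qed.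

Lemma agree (R : rcfType) s b (t : tprof R) : t \in prof_seq s -> btf s b t = b t.
Proof.
move=> Ht; rewrite btf_else; last by move=> i j; rewrite not_mut.
congr b; apply/ffunP => i; by rewrite ffunE not_mut.
Qed.

Lemma key (R : rcfType) s w b (e : 'I_3 -> R) k :
  is_pop s w -> is_eq s b -> (forall j, 0 < e j < 1) ->
  avg_fit (post_s setT s (mtf s)) (post_w setT w (mtf s) e) (btf s b) k (stf s k) <
  avg_fit (post_s setT s (mtf s)) (post_w setT w (mtf s) e) (btf s b) k (mtf s k).
Proof.
move=> Hp Hb He.
set s' := post_s setT s (mtf s); set w' := post_w setT w (mtf s) e.
have Hst := stf_neq k Hp.
have Hu : uniq (s' k).
  by rewrite /s' post_sT rcons_uniq mtv_notin; case: (Hp k).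
have Hm1 : mtf s k \in s' k by rewrite /s' post_sT mem_rcons mem_head.
have Hm2 : stf s k \in s' k by rewrite /s' post_sT mem_rcons inE (stf_in k Hp) orbT.
have wpos : forall j th, th \in s' j -> 0 < w' j th.
  move=> j th; rewrite /s' /w' post_sT mem_rcons inE /post_w in_setT.
  case: (eqVneq th (mtf s j)) => [_ _|_ /= Hth]; first by case/andP: (He j).
  case: (Hp j) => _ Hw _; apply: mulr_gt0; last exact: Hw.
  by case/andP: (He j) => _ H1; rewrite subr_gt0.
have Wpos : forall t, t \in prof_seq s' -> 0 < \prod_(j < 3 | j != k) w' j (t j).
  move=> t /mem_prof_seq Ht; apply: prodr_gt0 => j _; exact: wpos.
rewrite /avg_fit (reindex _ Hu Hm1 Hm2).
have HW : forall t : tprof R, \prod_(j < 3 | j != k) w' j (setk t k (mtf s k) j) =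
                               \prod_(j < 3 | j != k) w' j (t j).
  by move=> t; apply: eq_bigr => j Hj; rewrite ffunE (negbTE Hj).
under [X in _ < X]eq_bigr => t _ do rewrite HW.
rewrite -subr_gt0 -sumrB.
set t0 : tprof R := [ffun i => if i == k then stf s k else mtf s i].
have Ht0 : t0 \in prof_seq s'.
  apply/mem_prof_seq => i; rewrite ffunE; case: (eqVneq i k) => [->|_] //.
  by rewrite /s' post_sT mem_rcons mem_head.
have Ht0k : t0 k = stf s k by rewrite ffunE eqxx.
rewrite (big_rem t0 Ht0) /= Ht0k eqxx.
apply: ltr_pwDl.
  rewrite -mulrBr; apply: mulr_gt0; first exact: Wpos.
  rewrite subr_gt0; apply: (ptw_strict _ Hp) => // i Hi.
  by rewrite ffunE (negbTE Hi).
rewrite big_seq_cond; apply: sumr_ge0 => t /andP [Ht /eqP Htk].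
have Ht' : t \in prof_seq s' by apply: mem_rem Ht.
rewrite -mulrBr; apply: mulr_ge0; first exact/ltW/Wpos.
by rewrite subr_ge0; exact: ptw Hp Hb Ht' Htk.
Qed.

Lemma no_stable (R : rcfType) s w (b : tprof R -> mprof R) : ~ stable s w b.
Proof.
move=> [Hp Hb Hbal Hst].
have Hmt : forall j, j \in setT -> mtf s j \notin s j by move=> j _; apply: mtv_notin.
have HJ : [set: 'I_3] != set0 by apply/set0Pn; exists ord0; rewrite in_setT.
case: (Hst setT (mtf s) HJ Hmt) => eb [/andP[eb0 eb1] H].
have Hh1 : 0 < eb / 2 by clear -eb0; lra.
have Hh2 : eb / 2 < 1 by clear -eb0 eb1; lra.
have Hh3 : eb / 2 < eb by clear -eb0; lra.
have He : forall j : 'I_3, 0 < (fun _ => eb / 2) j < 1 by move=> j /=; rewrite Hh1 Hh2.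
have := H (fun _ => eb / 2) (fun j _ => He j) (fun j _ => Hh3) (btf s b)
          (eq_btf Hp Hb) (fun t Ht => agree b Ht).
move=> [[j _ Hj] | Hall].
  have := Hj _ (stf_in j Hp); rewrite ltNge => /negP; apply.
  exact/ltW/(key j Hp Hb He).
have := key ord0 Hp Hb He.
rewrite (Hall ord0 (stf s ord0) (mtf s ord0)) ?ltxx //.
  by rewrite post_sT mem_rcons inE (stf_in ord0 Hp) orbT.
by rewrite post_sT mem_rcons mem_head.
Qed.

Unset Implicit Arguments.
Theorem mainTheorem7 (R : rcfType) :
  ~ stable_profile (pure_prof R [ffun _ => ord0]) /\
  (forall sigma : mprof R, is_mprof sigma -> ~ stable_profile sigma).
Proof.
split; first by move=> [s [w [b [Hs _]]]]; exact: no_stable Hs.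
by move=> sigma _ [s [w [b [Hs _]]]]; exact: no_stable Hs.
Qed.
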